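(* Let $p\in(0,1)$, $\gamma>0$, $B>0$, $w\in\mathbb{N}$, and for each $N\in\mathbb{N}$ let $(\xi_j^{(N)*})_{j=1}^N$ be the unique maximizer of $\mathcal{T}_N$. Then for every fixed $j\in\mathbb{N}$, the sequence $(\xi_j^{(N)*})_{N\ge j}$ is strictly decreasing in $N$; that is, $\xi_j^{(N+1)*}<\xi_j^{(N)*}$ for all $N\ge j$.
   Context: Logarithms are base 2. For an admissible (nonnegative, with sum at most $B$) sequence $(x_j)_{j\ge1}$, $$\mathcal{T}_\infty(x_1,x_2,\dots)=\sum_{k=1}^{w}p^2(1-p)^{k-1}\frac{k}{2}\log_2\!\Big(1+\gamma\frac{B}{k}\Big)+\sum_{j=1}^{\infty}p(1-p)^{j+w-1}\frac12\log_2(1+\gamma x_j)+\sum_{k=1}^{\infty}p^2(1-p)^{k+w-1}\frac{w}{2}\log_2\!\Big(1+\gamma\frac{B-\sum_{j=1}^{k}x_j}{w}\Big).$$ For $N\in\mathbb{N}$ and $\xi_1,\dots,\xi_N\ge0$ with $\sum_{j=1}^N\xi_j\le B$, define $\mathcal{T}_N(\xi_1,\dots,\xi_N)=\mathcal{T}_\infty(\xi_1,\dots,\xi_N,0,0,\dots)$. $\mathcal{T}_N$ has a unique maximizer over this compact set, denoted $(\xi_j^{(N)*})_{j=1}^N$. *)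

(* Defs.v *)
From Stdlib Require Import Reals.
From Coquelicot Require Import Coquelicot.
Open Scope R_scope.

Definition log2 (x : R) : R := ln x / ln 2.

(* Sequences are indexed 1,2,3,...: x : nat -> R, value at 0 is ignored. *)

Definition psum (x : nat -> R) (k : nat) : R := sum_n_m x 1 k.

Definition T_inf (p gamma B : R) (w : nat) (x : nat -> R) : R :=
  sum_n_m (fun k => p ^ 2 * (1 - p) ^ (k - 1) * (INR k / 2)
                     * log2 (1 + gamma * (B / INR k))) 1 w
  + Series (fun n => let j := S n in
      p * (1 - p) ^ (j + w - 1) * (1 / 2) * log2 (1 + gamma * x j))
  + Series (fun n => let k := S n in
      p ^ 2 * (1 - p) ^ (k + w - 1) * (INR w / 2)
        * log2 (1 + gamma * ((B - psum x k) / INR w))).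

Definition pad (N : nat) (xi : nat -> R) : nat -> R :=
  fun j => if andb (Nat.leb 1 j) (Nat.leb j N) then xi j else 0.

Definition T_N (p gamma B : R) (w N : nat) (xi : nat -> R) : R :=
  T_inf p gamma B w (pad N xi).

Definition feasible (B : R) (N : nat) (xi : nat -> R) : Prop :=
  (forall j, (1 <= j <= N)%nat -> 0 <= xi j) /\ psum xi N <= B.

Definition is_maximizer (p gamma B : R) (w N : nat) (xi : nat -> R) : Prop :=
  feasible B N xi /\
  forall eta, feasible B N eta -> T_N p gamma B w N eta <= T_N p gamma B w N xi.

(* Main.v *)
Require Import Defs.
From Stdlib Require Import Reals Lra Lia.
From Coquelicot Require Import Coquelicot.
Open Scope R_scope.


Lemma psum_0 x : psum x 0 = 0.
Proof. unfold psum. rewrite sum_n_m_zero; [reflexivity|lia]. Qed.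

Lemma psum_S x k : psum x (S k) = psum x k + x (S k).
Proof. unfold psum. rewrite sum_n_Sm; [reflexivity|lia]. Qed.

Lemma sum_ind j d N :
  sum_n_m (fun i => if Nat.eqb i j then d else 0) 1 N =
  if andb (Nat.leb 1 j) (Nat.leb j N) then d else 0.
Proof.
  induction N.
  - rewrite sum_n_m_zero; [|lia].
    destruct (Nat.leb_spec 1 j); destruct (Nat.leb_spec j 0); simpl; try reflexivity; lia.
  - rewrite sum_n_Sm; [|lia]. rewrite IHN.
    destruct (Nat.eqb_spec (S N) j);
    destruct (Nat.leb_spec 1 j); destruct (Nat.leb_spec j N); destruct (Nat.leb_spec j (S N)); unfold plus; simpl; try lra; lia.
Qed.

Lemma sum_zero_R a b : sum_n_m (fun _ => 0) a b = 0.
Proof. rewrite sum_n_m_const. lra. Qed.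
Goal True. idtac. Abort.


Definition aa p w j := p * (1 - p) ^ (j + w - 1) * (1 / 2).
Definition bb p w k := p ^ 2 * (1 - p) ^ (k + w - 1) * (INR w / 2).
Definition cc p w N := p * (1 - p) ^ (N + w) * (INR w / 2).
Definition ff gamma t := log2 (1 + gamma * t).
Definition gg gamma B w s := log2 (1 + gamma * ((B - s) / INR w)).
Definition C0 p gamma B w := sum_n_m (fun k => p ^ 2 * (1 - p) ^ (k - 1) * (INR k / 2)
                     * log2 (1 + gamma * (B / INR k))) 1 w.
Definition FN p gamma B w N x :=
  sum_n_m (fun j => aa p w j * ff gamma (x j)) 1 N
  + sum_n_m (fun k => bb p w k * gg gamma B w (psum x k)) 1 N
  + cc p w N * gg gamma B w (psum x N).

Lemma pad_in N x j : (1 <= j <= N)%nat -> pad N x j = x j.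
Proof. intros H. unfold pad. destruct (Nat.leb_spec 1 j); destruct (Nat.leb_spec j N); simpl; auto; lia. Qed.

Lemma pad_out N x j : (N < j)%nat -> pad N x j = 0.
Proof. intros H. unfold pad. destruct (Nat.leb_spec 1 j); destruct (Nat.leb_spec j N); simpl; auto; lia. Qed.

Lemma psum_pad_le N x k : (k <= N)%nat -> psum (pad N x) k = psum x k.
Proof. intros H. unfold psum. apply sum_n_m_ext_loc. intros i Hi. apply pad_in. lia. Qed.

Lemma psum_pad_ge N x k : (N <= k)%nat -> psum (pad N x) k = psum x N.
Proof.
  intros H. induction H.
  - apply psum_pad_le; lia.
  - rewrite psum_S, IHle, pad_out; [lra|lia].
Qed.

Lemma eqR (a b : R) : a = b -> a = b.
Proof. auto. Qed.

Lemma is_series_eq (a : nat -> R) l l' : is_series a l -> l = l' -> is_series a l'.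
Proof. intros H E; subst; exact H. Qed.

Lemma is_series_zero : is_series (fun _ : nat => 0) 0.
Proof.
  assert (H := is_series_geom (1/2)).
  assert (H1 : Rabs (1/2) < 1) by (rewrite Rabs_pos_eq; lra).
  specialize (H H1). apply (is_series_scal 0) in H.
  eapply is_series_ext; [|eapply is_series_eq; [exact H|]].
  2:{ unfold scal; simpl; unfold mult; simpl; ring. } intros n. unfold scal; simpl; unfold mult; simpl; ring.
Qed.

Lemma log2_1 : log2 1 = 0.
Proof. unfold log2. rewrite ln_1. lra. Qed.

Lemma T_N_closed p gamma B w N x : 0 < p < 1 -> (1 <= N)%nat ->
  T_N p gamma B w N x = C0 p gamma B w + FN p gamma B w N x.
Proof.
  intros Hp HN. destruct N as [|M]; [lia|].
  unfold T_N, T_inf, FN, C0.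
  set (s2 := fun n : nat => let j := S n in
      p * (1 - p) ^ (j + w - 1) * (1 / 2) * log2 (1 + gamma * pad (S M) x j)).
  set (s3 := fun n : nat => let k := S n in
      p ^ 2 * (1 - p) ^ (k + w - 1) * (INR w / 2)
        * log2 (1 + gamma * ((B - psum (pad (S M) x) k) / INR w))).
  assert (E2 : sum_n s2 M = sum_n_m (fun j => aa p w j * ff gamma (x j)) 1 (S M)).
  { unfold sum_n. rewrite <- sum_n_m_S. apply sum_n_m_ext_loc. intros k Hk.
    unfold s2, aa, ff. simpl. rewrite pad_in; [reflexivity|lia]. }
  assert (E3 : sum_n s3 M = sum_n_m (fun k => bb p w k * gg gamma B w (psum x k)) 1 (S M)).
  { unfold sum_n. rewrite <- sum_n_m_S. apply sum_n_m_ext_loc. intros k Hk.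
    unfold s3, bb, gg. simpl. rewrite psum_pad_le; [reflexivity|lia]. }
  assert (S2 : is_series s2 (sum_n s2 M)).
  { apply (is_series_decr_n s2 (S M)); [lia|]. simpl pred.
    eapply is_series_eq; [eapply is_series_ext; [|exact is_series_zero]|].
    2:{ unfold plus, opp; simpl. rewrite Rplus_opp_r. reflexivity. }
    intros n. unfold s2. cbv beta.
    rewrite pad_out; [|lia]. rewrite Rmult_0_r, Rplus_0_r, log2_1. apply eqR. ring. }
  assert (S3 : is_series s3 (sum_n s3 M + cc p w (S M) * gg gamma B w (psum x (S M)))).
  { apply (is_series_decr_n s3 (S M)); [lia|]. simpl pred.
    assert (G := is_series_geom (1 - p)).
    assert (H1 : Rabs (1 - p) < 1) by (rewrite Rabs_pos_eq; lra).
    specialize (G H1).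
    apply (is_series_scal (p ^ 2 * (1 - p) ^ (S M + w) * (INR w / 2) * gg gamma B w (psum x (S M)))) in G.
    eapply is_series_eq; [eapply is_series_ext; [|exact G]|].
    2:{ unfold plus, opp, scal, cc; cbn -[Rinv pow]; unfold mult; cbn -[Rinv pow]. apply eqR. field. lra. }
    intros n. unfold s3. cbv beta. unfold scal; simpl; unfold mult; simpl.
    rewrite psum_pad_ge; [|lia]. unfold gg.
    rewrite !pow_add. apply eqR. ring. }
  rewrite (is_series_unique _ _ S2), (is_series_unique _ _ S3), E2, E3. ring.
Qed.


Lemma sum_upd (F G : nat -> R) N j d : (1 <= j <= N)%nat ->
  (forall i, (1 <= i <= N)%nat -> G i = F i + if Nat.eqb i j then d else 0) ->
  sum_n_m G 1 N = sum_n_m F 1 N + d.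
Proof.
  intros Hj H. rewrite (sum_n_m_ext_loc G (fun i => plus (F i) (if Nat.eqb i j then d else 0))).
  2:{ intros; rewrite H; auto. }
  rewrite sum_n_m_plus, sum_ind.
  destruct (Nat.leb_spec 1 j); destruct (Nat.leb_spec j N); simpl; try lia. reflexivity.
Qed.

Definition upd2 (x : nat -> R) j e := fun i =>
  if Nat.eqb i j then x i + e else if Nat.eqb i (S j) then x i - e else x i.
Definition upd1 (x : nat -> R) j e := fun i => if Nat.eqb i j then x i + e else x i.

Lemma psum_upd2 x j e k : (1 <= j)%nat ->
  psum (upd2 x j e) k = psum x k + (if Nat.eqb k j then e else 0).
Proof.
  intros Hj. induction k.
  - rewrite !psum_0. destruct (Nat.eqb_spec 0 j); [lia|lra].
  - rewrite !psum_S, IHk. unfold upd2.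
    destruct (Nat.eqb_spec k j); destruct (Nat.eqb_spec (S k) j); destruct (Nat.eqb_spec (S k) (S j)); try lia; lra.
Qed.

Lemma psum_upd1 x j e k : (1 <= j)%nat -> (k <= j)%nat ->
  psum (upd1 x j e) k = psum x k + (if Nat.eqb k j then e else 0).
Proof.
  intros H0 Hj. induction k.
  - rewrite !psum_0. destruct (Nat.eqb_spec 0 j); [lia|lra].
  - rewrite !psum_S, IHk by lia. unfold upd1.
    destruct (Nat.eqb_spec k j); destruct (Nat.eqb_spec (S k) j); try lia; lra.
Qed.

Lemma FN_upd2 p gamma B w N x j e : (1 <= j)%nat -> (j < N)%nat ->
  FN p gamma B w N (upd2 x j e) = FN p gamma B w N x
  + aa p w j * (ff gamma (x j + e) - ff gamma (x j))
  + aa p w (S j) * (ff gamma (x (S j) - e) - ff gamma (x (S j)))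
  + bb p w j * (gg gamma B w (psum x j + e) - gg gamma B w (psum x j)).
Proof.
  intros H1 H2. unfold FN.
  rewrite (sum_upd (fun i => aa p w i * ff gamma (x i + if Nat.eqb i j then e else 0))
            _ N (S j) (aa p w (S j) * (ff gamma (x (S j) - e) - ff gamma (x (S j))))).
  3:{ intros i Hi. cbv beta. unfold upd2. destruct (Nat.eqb_spec i j); destruct (Nat.eqb_spec i (S j)); try lia.
      all: try subst; apply eqR; repeat rewrite Rplus_0_r; ring. }
  2: lia.
  rewrite (sum_upd (fun i => aa p w i * ff gamma (x i))
            _ N j (aa p w j * (ff gamma (x j + e) - ff gamma (x j)))).
  3:{ intros i Hi. cbv beta. destruct (Nat.eqb_spec i j); try lia.
      all: try subst; apply eqR; repeat rewrite Rplus_0_r; ring. }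
  2: lia.
  rewrite (sum_upd (fun k => bb p w k * gg gamma B w (psum x k))
            (fun k => bb p w k * gg gamma B w (psum (upd2 x j e) k)) N j (bb p w j * (gg gamma B w (psum x j + e) - gg gamma B w (psum x j)))).
  3:{ intros i Hi. cbv beta. rewrite psum_upd2 by lia. destruct (Nat.eqb_spec i j); try lia.
      all: try subst; apply eqR; repeat rewrite Rplus_0_r; ring. }
  2: lia.
  rewrite psum_upd2 by lia. destruct (Nat.eqb_spec N j); try lia. apply eqR. rewrite Rplus_0_r. ring.
Qed.

Lemma FN_upd1 p gamma B w N x e : (1 <= N)%nat ->
  FN p gamma B w N (upd1 x N e) = FN p gamma B w N x
  + aa p w N * (ff gamma (x N + e) - ff gamma (x N))
  + (bb p w N + cc p w N) * (gg gamma B w (psum x N + e) - gg gamma B w (psum x N)).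
Proof.
  intros H1. unfold FN.
  rewrite (sum_upd (fun i => aa p w i * ff gamma (x i))
            _ N N (aa p w N * (ff gamma (x N + e) - ff gamma (x N)))).
  3:{ intros i Hi. cbv beta. unfold upd1. destruct (Nat.eqb_spec i N); try lia.
      all: try subst; apply eqR; repeat rewrite Rplus_0_r; ring. }
  2: lia.
  rewrite (sum_upd (fun k => bb p w k * gg gamma B w (psum x k))
            (fun k => bb p w k * gg gamma B w (psum (upd1 x N e) k)) N N (bb p w N * (gg gamma B w (psum x N + e) - gg gamma B w (psum x N)))).
  3:{ intros i Hi. cbv beta. rewrite psum_upd1 by lia. destruct (Nat.eqb_spec i N); try lia.
      all: try subst; apply eqR; repeat rewrite Rplus_0_r; ring. }
  2: lia.
  rewrite psum_upd1 by lia. rewrite Nat.eqb_refl. apply eqR. ring.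
Qed.


Definition U p gamma w j t := aa p w j * (gamma / ((1 + gamma * t) * ln 2)).
Definition H gamma B w s := gamma / INR w / ((1 + gamma * ((B - s) / INR w)) * ln 2).

Lemma ln2_pos : 0 < ln 2.
Proof. rewrite <- ln_1. apply ln_increasing; lra. Qed.

Lemma deriv2 p gamma B w a b s j :
  0 < gamma -> (1 <= w)%nat -> 0 <= a -> 0 <= b -> s <= B ->
  is_derive (fun e => aa p w j * ff gamma (a + e) + aa p w (S j) * ff gamma (b - e)
                      + bb p w j * gg gamma B w (s + e)) 0
    (U p gamma w j a - U p gamma w (S j) b - bb p w j * H gamma B w s).
Proof.
  intros Hg Hw Ha Hb Hs.
  assert (0 < INR w) by (apply lt_0_INR; lia).
  assert (0 <= (B - s) / INR w) by (apply Rdiv_le_0_compat; lra).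
  assert (L := ln2_pos).
  assert (0 < 1 + gamma * ((B - s) / INR w)) by nra.
  unfold ff, gg, log2, U, H. auto_derive.
  - rewrite ?Ropp_0, ?Rplus_0_r, ?Rminus_0_r. repeat split; nra.
  - rewrite ?Ropp_0, ?Rplus_0_r, ?Rminus_0_r. unfold Rdiv. field. repeat split; try lra; try nra.
Qed.

Lemma deriv1 p gamma B w a s j c :
  0 < gamma -> (1 <= w)%nat -> 0 <= a -> s <= B ->
  is_derive (fun e => aa p w j * ff gamma (a + e) + c * gg gamma B w (s + e)) 0
    (U p gamma w j a - c * H gamma B w s).
Proof.
  intros Hg Hw Ha Hs.
  assert (0 < INR w) by (apply lt_0_INR; lia).
  assert (0 <= (B - s) / INR w) by (apply Rdiv_le_0_compat; lra).
  assert (L := ln2_pos).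
  assert (0 < 1 + gamma * ((B - s) / INR w)) by nra.
  unfold ff, gg, log2, U, H. auto_derive.
  - rewrite ?Ropp_0, ?Rplus_0_r, ?Rminus_0_r. repeat split; nra.
  - rewrite ?Ropp_0, ?Rplus_0_r, ?Rminus_0_r. unfold Rdiv. field. repeat split; try lra; try nra.
Qed.

Lemma right_max f l d : is_derive f 0 l -> 0 < d ->
  (forall e, 0 < e < d -> f e <= f 0) -> l <= 0.
Proof.
  intros Hd Hdp Hm. apply is_derive_Reals in Hd.
  destruct (Rle_or_lt l 0) as [|Hl]; auto. exfalso.
  destruct (Hd l Hl) as [del Hdel].
  set (h := Rmin del d / 2).
  assert (Hh : 0 < h) by (unfold h; assert (0 < Rmin del d) by (apply Rmin_pos; [apply cond_pos|lra]); lra).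
  assert (Hh2 : h < del /\ h < d).
  { unfold h. assert (Rmin del d <= del) by apply Rmin_l. assert (Rmin del d <= d) by apply Rmin_r.
    assert (0 < Rmin del d) by (apply Rmin_pos; [apply cond_pos|lra]). lra. }
  specialize (Hdel h (Rgt_not_eq _ _ Hh)).
  assert (Rabs h < del) by (rewrite Rabs_pos_eq; lra).
  specialize (Hdel H0). rewrite Rplus_0_l in Hdel.
  specialize (Hm h (conj Hh (proj2 Hh2))).
  assert ((f h - f 0) / h <= 0).
  { unfold Rdiv. apply Rmult_le_0_r; [lra|]. left; apply Rinv_0_lt_compat; lra. }
  apply Rabs_def2 in Hdel. lra.
Qed.

Lemma left_max f l d : is_derive f 0 l -> 0 < d ->
  (forall e, -d < e < 0 -> f e <= f 0) -> 0 <= l.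
Proof.
  intros Hd Hdp Hm. apply is_derive_Reals in Hd.
  destruct (Rle_or_lt 0 l) as [|Hl]; auto. exfalso.
  assert (Hl' : 0 < - l) by lra.
  destruct (Hd (-l) Hl') as [del Hdel].
  set (h := - (Rmin del d / 2)).
  assert (Hm0 : 0 < Rmin del d) by (apply Rmin_pos; [apply cond_pos|lra]).
  assert (Hh2 : Rmin del d <= del /\ Rmin del d <= d) by (split; [apply Rmin_l|apply Rmin_r]).
  assert (Hh : h < 0) by (unfold h; lra).
  specialize (Hdel h (Rlt_not_eq _ _ Hh)).
  assert (Rabs h < del) by (rewrite Rabs_left by lra; unfold h; lra).
  specialize (Hdel H0). rewrite Rplus_0_l in Hdel.
  assert (-d < h < 0) by (unfold h; lra).
  specialize (Hm h H1).
  assert (0 <= (f h - f 0) / h).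
  { replace ((f h - f 0) / h) with ((f 0 - f h) / (- h)) by (field; lra).
    apply Rdiv_le_0_compat; lra. }
  apply Rabs_def2 in Hdel. lra.
Qed.


Lemma psum_nonneg x N k : (forall i, (1 <= i <= N)%nat -> 0 <= x i) -> (k <= N)%nat -> 0 <= psum x k.
Proof.
  intros Hx Hk. induction k.
  - rewrite psum_0; lra.
  - rewrite psum_S. assert (0 <= x (S k)) by (apply Hx; lia). specialize (IHk ltac:(lia)). lra.
Qed.

Lemma psum_le x N k : (forall i, (1 <= i <= N)%nat -> 0 <= x i) -> (k <= N)%nat -> psum x k <= psum x N.
Proof.
  intros Hx Hk. induction Hk.
  - lra.
  - rewrite psum_S. assert (0 <= x (S m)) by (apply Hx; lia).
    assert (psum x k <= psum x m) by (apply IHHk; intros; apply Hx; lia). lra.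
Qed.

Lemma feasible_upd2 B N x j e : feasible B N x -> (1 <= j)%nat -> (j < N)%nat ->
  - x j <= e <= x (S j) -> feasible B N (upd2 x j e).
Proof.
  intros [Hx Hs] H1 H2 He. split.
  - intros i Hi. unfold upd2. specialize (Hx i Hi).
    destruct (Nat.eqb_spec i j); destruct (Nat.eqb_spec i (S j)); subst; lra.
  - rewrite psum_upd2 by lia. destruct (Nat.eqb_spec N j); [lia|lra].
Qed.

Lemma feasible_upd1 B N x e : feasible B N x -> (1 <= N)%nat ->
  - x N <= e -> psum x N + e <= B -> feasible B N (upd1 x N e).
Proof.
  intros [Hx Hs] H1 He1 He2. split.
  - intros i Hi. unfold upd1. specialize (Hx i Hi).
    destruct (Nat.eqb_spec i N); subst; lra.
  - rewrite psum_upd1 by lia. rewrite Nat.eqb_refl. lra.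
Qed.

Lemma max_upd2 p gamma B w N x j e : 0 < p < 1 -> (1 <= N)%nat ->
  is_maximizer p gamma B w N x -> (1 <= j)%nat -> (j < N)%nat ->
  - x j <= e <= x (S j) ->
  aa p w j * ff gamma (x j + e) + aa p w (S j) * ff gamma (x (S j) - e)
  + bb p w j * gg gamma B w (psum x j + e)
  <= aa p w j * ff gamma (x j + 0) + aa p w (S j) * ff gamma (x (S j) - 0)
  + bb p w j * gg gamma B w (psum x j + 0).
Proof.
  intros Hp HN [Hf Hm] H1 H2 He.
  specialize (Hm _ (feasible_upd2 B N x j e Hf H1 H2 He)).
  rewrite !T_N_closed in Hm by auto. rewrite FN_upd2 in Hm by auto.
  rewrite !Rplus_0_r, Rminus_0_r. lra.
Qed.

Lemma max_upd1 p gamma B w N x e : 0 < p < 1 -> (1 <= N)%nat ->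
  is_maximizer p gamma B w N x ->
  - x N <= e -> psum x N + e <= B ->
  aa p w N * ff gamma (x N + e) + (bb p w N + cc p w N) * gg gamma B w (psum x N + e)
  <= aa p w N * ff gamma (x N + 0) + (bb p w N + cc p w N) * gg gamma B w (psum x N + 0).
Proof.
  intros Hp HN [Hf Hm] H1 H2.
  specialize (Hm _ (feasible_upd1 B N x e Hf HN H1 H2)).
  rewrite !T_N_closed in Hm by auto. rewrite FN_upd1 in Hm by auto.
  rewrite !Rplus_0_r. lra.
Qed.

Section FOC.
Variables (p gamma B : R) (w N : nat) (x : nat -> R).
Hypotheses (Hp : 0 < p < 1) (Hg : 0 < gamma) (HB : 0 < B) (Hw : (1 <= w)%nat)
  (HN : (1 <= N)%nat) (Hmax : is_maximizer p gamma B w N x).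

Let Hnn : forall i, (1 <= i <= N)%nat -> 0 <= x i.
Proof. apply Hmax. Qed.
Let HsB : psum x N <= B.
Proof. apply Hmax. Qed.
Let HsjB j : (j <= N)%nat -> psum x j <= B.
Proof. intros. assert (psum x j <= psum x N) by (apply psum_le; auto). lra. Qed.

Lemma P1 j : (1 <= j)%nat -> (j < N)%nat -> 0 < x (S j) ->
  U p gamma w j (x j) - U p gamma w (S j) (x (S j)) - bb p w j * H gamma B w (psum x j) <= 0.
Proof.
  intros H1 H2 Hx.
  apply (right_max _ _ (x (S j)) (deriv2 p gamma B w (x j) (x (S j)) (psum x j) j Hg Hw
     ltac:(apply Hnn; lia) ltac:(apply Hnn; lia) ltac:(apply HsjB; lia))); auto.
  intros e He. cbv beta. apply (max_upd2 p gamma B w N x j e); auto.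
  assert (0 <= x j) by (apply Hnn; lia). lra.
Qed.

Lemma P2 j : (1 <= j)%nat -> (j < N)%nat -> 0 < x j ->
  0 <= U p gamma w j (x j) - U p gamma w (S j) (x (S j)) - bb p w j * H gamma B w (psum x j).
Proof.
  intros H1 H2 Hx.
  apply (left_max _ _ (x j) (deriv2 p gamma B w (x j) (x (S j)) (psum x j) j Hg Hw
     ltac:(apply Hnn; lia) ltac:(apply Hnn; lia) ltac:(apply HsjB; lia))); auto.
  intros e He. cbv beta. apply (max_upd2 p gamma B w N x j e); auto.
  assert (0 <= x (S j)) by (apply Hnn; lia). lra.
Qed.

Lemma P3 : psum x N < B ->
  U p gamma w N (x N) - (bb p w N + cc p w N) * H gamma B w (psum x N) <= 0.
Proof.
  intros Hs.
  apply (right_max _ _ (B - psum x N) (deriv1 p gamma B w (x N) (psum x N) N (bb p w N + cc p w N) Hg Hw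
     ltac:(apply Hnn; lia) HsB)); [lra|].
  intros e He. cbv beta. apply (max_upd1 p gamma B w N x e); auto.
  assert (0 <= x N) by (apply Hnn; lia). lra. lra.
Qed.

Lemma P4 : 0 < x N ->
  0 <= U p gamma w N (x N) - (bb p w N + cc p w N) * H gamma B w (psum x N).
Proof.
  intros Hx.
  apply (left_max _ _ (x N) (deriv1 p gamma B w (x N) (psum x N) N (bb p w N + cc p w N) Hg Hw
     ltac:(apply Hnn; lia) HsB)); [lra|].
  intros e He. cbv beta. apply (max_upd1 p gamma B w N x e); auto; lra.
Qed.

End FOC.


Lemma aa_pos p w j : 0 < p < 1 -> 0 < aa p w j.
Proof. intros Hp. unfold aa. assert (0 < (1-p)^(j+w-1)) by (apply pow_lt; lra). nra. Qed.

Lemma bb_pos p w j : 0 < p < 1 -> (1 <= w)%nat -> 0 < bb p w j.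
Proof. intros Hp Hw. unfold bb. assert (0 < (1-p)^(j+w-1)) by (apply pow_lt; lra).
  assert (W0 : 0 < INR w) by (apply lt_0_INR; lia). assert (0 < p^2) by (apply pow_lt; lra).
  apply Rmult_lt_0_compat; [nra|lra]. Qed.

Lemma cc_pos p w j : 0 < p < 1 -> (1 <= w)%nat -> 0 < cc p w j.
Proof. intros Hp Hw. unfold cc. assert (0 < (1-p)^(j+w)) by (apply pow_lt; lra).
  assert (W0 : 0 < INR w) by (apply lt_0_INR; lia). 
  apply Rmult_lt_0_compat; [nra|lra]. Qed.

Lemma I1 p gamma B w j : (1 <= j)%nat -> (1 <= w)%nat -> 0 < p < 1 ->
  U p gamma w j 0 - U p gamma w (S j) 0 = bb p w j * H gamma B w B.
Proof.
  intros Hj Hw Hp. assert (W0 : 0 < INR w) by (apply lt_0_INR; lia). assert (L := ln2_pos).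
  unfold U, H, aa, bb. replace (S j + w - 1)%nat with (S (j + w - 1)) by lia.
  replace (B - B) with 0 by ring. rewrite <- tech_pow_Rmult. field. all: repeat split; lra.
Qed.

Lemma I2 p gamma B w N : (1 <= N)%nat -> (1 <= w)%nat -> 0 < p < 1 ->
  U p gamma w N 0 = (bb p w N + cc p w N) * H gamma B w B.
Proof.
  intros Hj Hw Hp. assert (W0 : 0 < INR w) by (apply lt_0_INR; lia). assert (L := ln2_pos).
  assert (E : (1-p)^(N+w) = (1-p) * (1-p)^(N+w-1)) by (rewrite tech_pow_Rmult; f_equal; lia).
  unfold U, H, aa, bb, cc. rewrite E.
  replace (B - B) with 0 by ring. field. all: repeat split; lra.
Qed.

Lemma I3 p w N : (1 <= w)%nat -> cc p w N = bb p w (S N) + cc p w (S N).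
Proof.
  intros Hw. unfold bb, cc. replace (S N + w - 1)%nat with (N + w)%nat by lia.
  assert (E : (1-p)^(S N+w) = (1-p) * (1-p)^(N+w)) by (rewrite tech_pow_Rmult; f_equal; lia).
  rewrite E. ring.
Qed.

Lemma U_lt p gamma w j s t : 0 < p < 1 -> 0 < gamma -> 0 <= s -> s < t ->
  U p gamma w j t < U p gamma w j s.
Proof.
  intros Hp Hg Hs Ht. assert (L := ln2_pos). assert (A := aa_pos p w j Hp). unfold U.
  apply Rmult_lt_compat_l; auto. unfold Rdiv. apply Rmult_lt_compat_l; auto.
  assert (A1 : 0 < (1 + gamma * s) * ln 2) by (apply Rmult_lt_0_compat; nra).
  assert (A2 : 0 < (1 + gamma * t) * ln 2) by (apply Rmult_lt_0_compat; nra).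
  apply Rinv_lt_contravar; [apply Rmult_lt_0_compat; auto | apply Rmult_lt_compat_r; nra].
Qed.

Lemma U_le p gamma w j s t : 0 < p < 1 -> 0 < gamma -> 0 <= s -> s <= t ->
  U p gamma w j t <= U p gamma w j s.
Proof.
  intros Hp Hg Hs Ht. destruct Ht as [Ht|Ht]; [left; apply U_lt; auto | subst; lra].
Qed.

Lemma H_lt gamma B w s t : 0 < gamma -> (1 <= w)%nat -> s < t -> t <= B ->
  H gamma B w s < H gamma B w t.
Proof.
  intros Hg Hw Hst HtB. assert (L := ln2_pos). assert (W0 : 0 < INR w) by (apply lt_0_INR; lia).
  assert (W1 : 0 <= (B - t) / INR w) by (apply Rdiv_le_0_compat; lra).
  assert (W2 : (B - t) / INR w < (B - s) / INR w) by (unfold Rdiv; apply Rmult_lt_compat_r; [apply Rinv_0_lt_compat|]; lra).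
  unfold H. unfold Rdiv at 1 3. apply Rmult_lt_compat_l.
  - unfold Rdiv; apply Rmult_lt_0_compat; [lra|apply Rinv_0_lt_compat; lra].
  - assert (A1 : 0 < (1 + gamma * ((B - s) / INR w)) * ln 2) by (apply Rmult_lt_0_compat; nra).
    assert (A2 : 0 < (1 + gamma * ((B - t) / INR w)) * ln 2) by (apply Rmult_lt_0_compat; nra).
    apply Rinv_lt_contravar; [apply Rmult_lt_0_compat; auto | apply Rmult_lt_compat_r; nra].
Qed.

Lemma H_le gamma B w s t : 0 < gamma -> (1 <= w)%nat -> s <= t -> t <= B ->
  H gamma B w s <= H gamma B w t.
Proof.
  intros Hg Hw Hst HtB. destruct Hst as [Hst|Hst]; [left; apply H_lt; auto| subst; lra].
Qed.


Section Interior.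
Variables (p gamma B : R) (w N : nat) (x : nat -> R).
Hypotheses (Hp : 0 < p < 1) (Hg : 0 < gamma) (HB : 0 < B) (Hw : (1 <= w)%nat)
  (HN : (1 <= N)%nat) (Hmax : is_maximizer p gamma B w N x).

Let Hnn : forall i, (1 <= i <= N)%nat -> 0 <= x i.
Proof. apply Hmax. Qed.
Let HsB : psum x N <= B.
Proof. apply Hmax. Qed.
Let HsjB j : (j <= N)%nat -> psum x j <= B.
Proof. intros. assert (Z1 : psum x j <= psum x N) by (apply psum_le; auto). lra. Qed.

Lemma step1 j : (1 <= j)%nat -> (j < N)%nat -> x j = 0 -> x (S j) = 0.
Proof.
  intros H1 H2 Hx. destruct (Hnn (S j) ltac:(lia)) as [Hp'|]; auto. exfalso.
  assert (Q := P1 p gamma B w N x Hp Hg Hw HN Hmax j H1 H2 Hp').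
  rewrite Hx in Q.
  assert (Z2 : U p gamma w (S j) (x (S j)) < U p gamma w (S j) 0) by (apply U_lt; lra).
  assert (E := I1 p gamma B w j H1 Hw Hp).
  assert (Hb := bb_pos p w j Hp Hw).
  assert (Z3 : H gamma B w (psum x j) <= H gamma B w B) by (apply H_le; [exact Hg|exact Hw|apply HsjB; lia|lra]).
  assert (Z4 : bb p w j * H gamma B w (psum x j) <= bb p w j * H gamma B w B) by (apply Rmult_le_compat_l; lra).
  lra.
Qed.

Lemma stepQ k : (1 <= k <= N)%nat -> 0 < x k \/ psum x k < B.
Proof.
  induction k as [|k IH]; intros Hk; [lia|].
  destruct (Hnn (S k) Hk) as [Hpos|Hz]; [left; auto|right].
  rewrite psum_S, <- Hz, Rplus_0_r.
  destruct k as [|k].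
  - rewrite psum_0; lra.
  - destruct (IH ltac:(lia)) as [Hxk|]; auto.
    assert (Q := P2 p gamma B w N x Hp Hg Hw HN Hmax (S k) ltac:(lia) ltac:(lia) Hxk).
    rewrite <- Hz in Q.
    assert (Z5 : U p gamma w (S k) (x (S k)) < U p gamma w (S k) 0) by (apply U_lt; lra).
    assert (E := I1 p gamma B w (S k) ltac:(lia) Hw Hp).
    assert (Hb := bb_pos p w (S k) Hp Hw).
    assert (Hle : psum x (S k) <= B) by (apply HsjB; lia).
    destruct Hle as [|Heq]; auto. exfalso. rewrite Heq in Q. lra.
Qed.

Lemma xN_pos : 0 < x N.
Proof.
  destruct (stepQ N ltac:(lia)) as [|Hs]; auto.
  destruct (Hnn N ltac:(lia)) as [|Hz]; auto. exfalso.
  assert (Q := P3 p gamma B w N x Hp Hg Hw HN Hmax Hs).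
  rewrite <- Hz in Q. rewrite (I2 p gamma B w N HN Hw Hp) in Q.
  assert (Z6 : H gamma B w (psum x N) < H gamma B w B) by (apply H_lt; [exact Hg|exact Hw|lra|lra]).
  assert (Z7 : 0 < bb p w N + cc p w N) by (pose proof (bb_pos p w N Hp Hw); pose proof (cc_pos p w N Hp Hw); lra).
  assert (Z8 : (bb p w N + cc p w N) * H gamma B w (psum x N) < (bb p w N + cc p w N) * H gamma B w B)
    by (apply Rmult_lt_compat_l; auto).
  lra.
Qed.

Lemma all_pos j : (1 <= j <= N)%nat -> 0 < x j.
Proof.
  intros Hj. replace j with (N - (N - j))%nat by lia.
  assert (Hd : (N - j < N)%nat) by lia. generalize Hd. generalize (N - j)%nat.
  induction n; intros Hn.
  - rewrite Nat.sub_0_r. apply xN_pos.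
  - destruct (Hnn (N - S n) ltac:(lia)) as [|Hz]; auto. exfalso.
    assert (Z := step1 (N - S n) ltac:(lia) ltac:(lia) (eq_sym Hz)).
    replace (S (N - S n)) with (N - n)%nat in Z by lia.
    specialize (IHn ltac:(lia)). lra.
Qed.

Lemma sN_lt : psum x N < B.
Proof.
  destruct HsB as [|Heq]; auto. exfalso.
  assert (Q := P4 p gamma B w N x Hp Hg Hw HN Hmax xN_pos).
  rewrite Heq, <- (I2 p gamma B w N HN Hw Hp) in Q.
  assert (Z9 : U p gamma w N (x N) < U p gamma w N 0) by (apply U_lt; auto; [lra|apply xN_pos]).
  lra.
Qed.

Lemma E1 j : (1 <= j)%nat -> (j < N)%nat ->
  U p gamma w j (x j) - U p gamma w (S j) (x (S j)) = bb p w j * H gamma B w (psum x j).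
Proof.
  intros H1 H2.
  assert (Q1 := P1 p gamma B w N x Hp Hg Hw HN Hmax j H1 H2 (all_pos (S j) ltac:(lia))).
  assert (Q2 := P2 p gamma B w N x Hp Hg Hw HN Hmax j H1 H2 (all_pos j ltac:(lia))).
  lra.
Qed.

Lemma E2 : U p gamma w N (x N) = (bb p w N + cc p w N) * H gamma B w (psum x N).
Proof.
  assert (Q1 := P3 p gamma B w N x Hp Hg Hw HN Hmax sN_lt).
  assert (Q2 := P4 p gamma B w N x Hp Hg Hw HN Hmax xN_pos).
  lra.
Qed.

End Interior.


Theorem lemma7 (p gamma B : R) (w : nat) (xi : nat -> nat -> R) :
  0 < p < 1 -> 0 < gamma -> 0 < B -> (1 <= w)%nat ->
  (forall N, (1 <= N)%nat -> is_maximizer p gamma B w N (xi N)) ->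
  forall j N, (1 <= j)%nat -> (j <= N)%nat -> xi (S N) j < xi N j.
Proof.
  intros Hp Hg HB Hw Hmax j N Hj HjN.
  assert (HN : (1 <= N)%nat) by lia.
  set (x := xi N). set (y := xi (S N)).
  assert (Mx : is_maximizer p gamma B w N x) by (apply Hmax; lia).
  assert (My : is_maximizer p gamma B w (S N) y) by (apply Hmax; lia).
  assert (xnn : forall i, (1 <= i <= N)%nat -> 0 <= x i) by apply Mx.
  assert (ynn : forall i, (1 <= i <= S N)%nat -> 0 <= y i) by apply My.
  assert (xB : forall k, (k <= N)%nat -> psum x k <= B).
  { intros k Hk. assert (psum x k <= psum x N) by (apply psum_le; auto). destruct Mx as [[_ Hs] _]. lra. }
  assert (yB : forall k, (k <= S N)%nat -> psum y k <= B).
  { intros k Hk. assert (psum y k <= psum y (S N)) by (apply psum_le; auto). destruct My as [[_ Hs] _]. lra. }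
  assert (Ex : forall k, (1 <= k)%nat -> (k < N)%nat ->
     U p gamma w (S k) (x (S k)) = U p gamma w k (x k) - bb p w k * H gamma B w (psum x k)).
  { intros k H1 H2. pose proof (E1 p gamma B w N x Hp Hg HB Hw HN Mx k H1 H2). lra. }
  assert (Ey : forall k, (1 <= k)%nat -> (k < S N)%nat ->
     U p gamma w (S k) (y (S k)) = U p gamma w k (y k) - bb p w k * H gamma B w (psum y k)).
  { intros k H1 H2. pose proof (E1 p gamma B w (S N) y Hp Hg HB Hw ltac:(lia) My k H1 H2). lra. }
  assert (psum1 : forall z, psum z 1 = z 1%nat) by (intros; rewrite psum_S, psum_0; ring).
  assert (Hbpos : forall k, 0 < bb p w k) by (intros; apply bb_pos; auto).
  destruct (Rlt_or_le (y 1%nat) (x 1%nat)) as [H1lt | H1le].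
  - assert (Cl : forall k, (1 <= k <= N)%nat -> y k < x k /\ psum y k < psum x k).
    { induction k as [|k IH]; intros Hk; [lia|].
      destruct k as [|k].
      + rewrite !psum1. auto.
      + destruct (IH ltac:(lia)) as [IH1 IH2].
        assert (Z1 : U p gamma w (S k) (x (S k)) < U p gamma w (S k) (y (S k)))
          by (apply U_lt; auto; apply ynn; lia).
        assert (Z2 : H gamma B w (psum y (S k)) < H gamma B w (psum x (S k)))
          by (apply H_lt; auto; apply xB; lia).
        assert (Z3 := Hbpos (S k)).
        assert (Z4 : bb p w (S k) * H gamma B w (psum y (S k)) < bb p w (S k) * H gamma B w (psum x (S k)))
          by (apply Rmult_lt_compat_l; auto).
        assert (Z5 := Ex (S k) ltac:(lia) ltac:(lia)).
        assert (Z6 := Ey (S k) ltac:(lia) ltac:(lia)).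
        assert (Hlt : y (S (S k)) < x (S (S k))).
        { destruct (Rlt_or_le (y (S (S k))) (x (S (S k)))) as [|Hc]; auto. exfalso.
          assert (U p gamma w (S (S k)) (y (S (S k))) <= U p gamma w (S (S k)) (x (S (S k))))
            by (apply U_le; auto; apply xnn; lia).
          lra. }
        split; auto. rewrite !(psum_S _ (S k)). lra. }
    apply Cl; lia.
  - exfalso.
    assert (Cl : forall k, (1 <= k <= N)%nat -> x k <= y k /\ psum x k <= psum y k).
    { induction k as [|k IH]; intros Hk; [lia|].
      destruct k as [|k].
      + rewrite !psum1. auto.
      + destruct (IH ltac:(lia)) as [IH1 IH2].
        assert (Z1 : U p gamma w (S k) (y (S k)) <= U p gamma w (S k) (x (S k)))
          by (apply U_le; auto; apply xnn; lia).
        assert (Z2 : H gamma B w (psum x (S k)) <= H gamma B w (psum y (S k)))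
          by (apply H_le; auto; apply yB; lia).
        assert (Z3 := Hbpos (S k)).
        assert (Z4 : bb p w (S k) * H gamma B w (psum x (S k)) <= bb p w (S k) * H gamma B w (psum y (S k)))
          by (apply Rmult_le_compat_l; lra).
        assert (Z5 := Ex (S k) ltac:(lia) ltac:(lia)).
        assert (Z6 := Ey (S k) ltac:(lia) ltac:(lia)).
        assert (Hle : x (S (S k)) <= y (S (S k))).
        { destruct (Rlt_or_le (y (S (S k))) (x (S (S k)))) as [Hc|Hc]; auto. exfalso.
          assert (U p gamma w (S (S k)) (x (S (S k))) < U p gamma w (S (S k)) (y (S (S k))))
            by (apply U_lt; auto; apply ynn; lia).
          lra. }
        split; auto. rewrite !(psum_S _ (S k)). lra. }
    destruct (Cl N ltac:(lia)) as [CN1 CN2].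
    assert (Ux := E2 p gamma B w N x Hp Hg HB Hw HN Mx).
    assert (Uy2 := E2 p gamma B w (S N) y Hp Hg HB Hw ltac:(lia) My).
    rewrite <- (I3 p w N Hw) in Uy2.
    assert (Uy1 := Ey N HN ltac:(lia)).
    assert (ypos := all_pos p gamma B w (S N) y Hp Hg HB Hw ltac:(lia) My (S N) ltac:(lia)).
    assert (Zs : psum y (S N) = psum y N + y (S N)) by apply psum_S.
    assert (Z1 : H gamma B w (psum y N) < H gamma B w (psum y (S N)))
      by (apply H_lt; [exact Hg|exact Hw|lra|apply yB; lia]).
    assert (Z2 : H gamma B w (psum x N) <= H gamma B w (psum y N))
      by (apply H_le; auto; apply yB; lia).
    assert (Z3 : U p gamma w N (y N) <= U p gamma w N (x N)) by (apply U_le; auto; apply xnn; lia).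
    assert (Zc := cc_pos p w N Hp Hw). assert (Zb := Hbpos N).
    assert (Z4 : cc p w N * H gamma B w (psum y N) < cc p w N * H gamma B w (psum y (S N)))
      by (apply Rmult_lt_compat_l; auto).
    assert (Z5 : (bb p w N + cc p w N) * H gamma B w (psum x N) <= (bb p w N + cc p w N) * H gamma B w (psum y N))
      by (apply Rmult_le_compat_l; lra).
    lra.
Qed.
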